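(* Let $n\ge1$ and let $f(x):=P(x)+iQ(x)$ with $P(x):=x^n+a_1x^{n-1}+\cdots+a_n$ and $Q(x):=b_1x^{n-1}+\cdots+b_n$ real polynomials. Suppose $f$ has (counting multiplicities) $n_+$ roots with positive imaginary part, $n_-$ roots with negative imaginary part and $n_0<n$ real roots, and let $d:=n-2\min\{n_+,n_-\}$. Then there exist real roots $\mu_1,\ldots,\mu_d$ of $P$ and $\nu_1,\ldots,\nu_{d-1}$ of $Q$ (counting multiplicities) with $\mu_1\le\nu_1\le\mu_2\le\cdots\le\nu_{d-1}\le\mu_d$ (strict inequalities if $n_0=0$) which moreover satisfy: (i) if either $n_->n_+$ and $\lim_{x\to-\infty}P(x)/Q(x)=\infty$, or $n_-<n_+$ and $\lim_{x\to-\infty}P(x)/Q(x)=-\infty$, then $Q$ has an additional real root $\nu_0$ (i.e. $\nu_0,\nu_1,\ldots,\nu_{d-1}$ are roots of $Q$ counting multiplicities) with $\nu_0\le\mu_1$; (ii) if either $n_->n_+$ and $\lim_{x\to\infty}P(x)/Q(x)=-\infty$, or $n_-<n_+$ and $\lim_{x\to\infty}P(x)/Q(x)=\infty$, then $Q$ has an additional real root $\nu_d$ (i.e. $\nu_1,\ldots,\nu_{d-1},\nu_d$ are roots of $Q$ counting multiplicities) with $\nu_d\ge\mu_d$. If $n_0=0$, then $\nu_0<\mu_1$ and $\nu_d>\mu_d$. The same conclusion holds when instead $f(x)=x^n+a_1x^{n-1}+\cdots+a_n$ is a real polynomial with $n_+$ roots of positive real part, $n_-$ roots of negative real part, $n_0<n$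 purely imaginary roots, $d:=n-2\min(n_+,n_-)$, and $P(x):=x^n-a_2x^{n-2}+a_4x^{n-4}-\cdots$, $Q(x):=a_1x^{n-1}-a_3x^{n-3}+a_5x^{n-5}-\cdots$.
   Context: ''Counting multiplicities'' means that a root of multiplicity $m$ may appear up to $m$ times in the respective list of roots. *)

(* Defs.v *)
From HB Require Import structures.
From mathcomp Require Import all_boot all_order all_algebra.
From mathcomp Require Import complex.
From mathcomp Require Import all_classical all_reals all_analysis.
Set Implicit Arguments. Unset Strict Implicit. Unset Printing Implicit Defensive.
Import Order.TTheory GRing.Theory Num.Theory.
Import numFieldNormedType.Exports.
Local Open Scope classical_set_scope. Local Open Scope ring_scope.

Definition oseq (T : Type) (o : option T) : seq T :=
  if o is Some x then [:: x] else [::].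

Definition polyC_of (R : realType) (p : {poly R}) : {poly R[i]} :=
  map_poly (real_complex R) p.

Definition iC (R : realType) : R[i] := Complex 0 1.

Definition cond_left (R : realType) (np nm : nat) (P Q : {poly R}) : Prop :=
  ((np < nm)%N /\ (P.[x] / Q.[x]) @[x --> -oo] --> +oo) \/
  ((nm < np)%N /\ (P.[x] / Q.[x]) @[x --> -oo] --> -oo).

Definition cond_right (R : realType) (np nm : nat) (P Q : {poly R}) : Prop :=
  ((np < nm)%N /\ (P.[x] / Q.[x]) @[x --> +oo] --> -oo) \/
  ((nm < np)%N /\ (P.[x] / Q.[x]) @[x --> +oo] --> +oo).

(* The common conclusion.  d := n - 2 min(n+, n-).
   mu = [mu_1; ...; mu_d] are real roots of P counting multiplicities
   (their product of linear factors divides P); nu = [nu_1; ...; nu_{d-1}]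
   together with the optional extra roots nu_0, nu_d are real roots of Q
   counting multiplicities. *)
Definition interlacing_conclusion (R : realType) (n np nm n0 : nat)
    (P Q : {poly R}) : Prop :=
  let d := (n - 2 * minn np nm)%N in
  let weak := (n0 != 0)%N in
  exists (mu nu : seq R) (nu0 nud : option R),
    [/\ size mu = d, size nu = d.-1,
        (\prod_(x <- mu) ('X - x%:P) %| P)%R,
        (\prod_(x <- oseq nu0 ++ nu ++ oseq nud) ('X - x%:P) %| Q)%R &
      [/\
        (forall i, (i < d.-1)%N ->
           (mu`_i < nu`_i ?<= if weak) /\ (nu`_i < mu`_i.+1 ?<= if weak)),
        (cond_left np nm P Q ->
           exists2 v, nu0 = Some v & (v < mu`_0 ?<= if weak)) &
        (cond_right np nm P Q ->
           exists2 v, nud = Some v & (mu`_d.-1 < v ?<= if weak))]].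

(* Second setting: from f = X^n + a_1 X^(n-1) + ... + a_n (a_k = f`_(n-k)),
   P = X^n - a_2 X^(n-2) + a_4 X^(n-4) - ...,
   Q = a_1 X^(n-1) - a_3 X^(n-3) + a_5 X^(n-5) - ... *)
Definition even_part (R : realType) (n : nat) (f : {poly R}) : {poly R} :=
  \poly_(i < n.+1) (if odd (n - i) then 0 else (-1) ^+ ((n - i)./2) * f`_i).
Definition odd_part (R : realType) (n : nat) (f : {poly R}) : {poly R} :=
  \poly_(i < n.+1) (if odd (n - i) then (-1) ^+ ((n - i)./2) * f`_i else 0).

(* Main.v *)
Require Import Defs.
From HB Require Import structures.
From mathcomp Require Import all_boot all_order all_algebra.
From mathcomp Require Import complex.
From mathcomp Require Import all_classical all_reals all_analysis.
From mathcomp Require Import ring lra zify.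
Import Order.TTheory GRing.Theory Num.Theory.
Import numFieldNormedType.Exports.
Set Implicit Arguments. Unset Strict Implicit. Unset Printing Implicit Defensive.
Local Open Scope ring_scope.
Section Comb.
Variable T : eqType.

Fixpoint alt (b : bool) (c : seq T) : seq T :=
  if c is x :: c' then (if b then x :: alt (~~ b) c' else alt (~~ b) c') else [::].

Lemma size_alt b c : size (alt b c) = ((size c + b) %/ 2)%N.
Proof.
elim: c b => [|x c IH] b /=; first by case: b.
case: b; rewrite /= IH /=; lia.
Qed.

Lemma nth_alt x0 b c i : nth x0 (alt b c) i = nth x0 c (i.*2 + ~~ b).
Proof.
elim: c b i => [|x c IH] b i /=; first by rewrite !nth_nil.
case: b => /=.
  case: i => [|i] //=; rewrite IH /= addn0 addn1 //.
by rewrite addn1 /= IH /= addn0.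
Qed.

Lemma alt_ins b c1 c2 r :
  perm_eq (alt b (c1 ++ r :: r :: c2)) (r :: alt b (c1 ++ c2)).
Proof.
elim: c1 b => [|x c1 IH] b /=; first by case: b => /=.
case: b => /=; last exact: IH.
apply: (@perm_trans T (x :: r :: alt false (c1 ++ c2))).
  by rewrite perm_cons IH.
by rewrite -[x :: r :: _]/([:: x] ++ [:: r] ++ _) perm_catCA.
Qed.

Lemma subseq_alt b c : subseq (alt b c) c.
Proof.
elim: c b => [|x c IH] b //=.
case: b => /=; first by rewrite eqxx IH.
exact: subseq_trans (IH true) (subseq_cons _ _).
Qed.

End Comb.
Arguments alt {T} b c.
Section Ins.
Variable R : realType.

Lemma ins1 (c : seq R) r : sorted <=%R c ->
  exists c1 c2, c = c1 ++ c2 /\ sorted <=%R (c1 ++ r :: r :: c2).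
Proof.
elim: c => [|x c IH] /=; first by move=> _; exists [::], [::]; rewrite /= lexx.
move=> Hs; have Hc := path_sorted Hs.
case: (leP r x) => Hrx.
  by exists [::], (x :: c); rewrite /= lexx Hrx.
have [c1 [c2 [E H2]]] := IH Hc.
exists (x :: c1), c2; split; first by rewrite E.
rewrite /= path_sortedE; last exact: le_trans.
rewrite H2 andbT all_cat /= (ltW Hrx).
move: Hs; rewrite path_sortedE; last exact: le_trans.
rewrite E all_cat => /andP[/andP[-> ->] _] //.
Qed.

Lemma ins_all (rr c : seq R) : sorted <=%R c -> exists c' : seq R,
  [/\ sorted <=%R c', size c' = (size c + 2 * size rr)%N &
      forall b, perm_eq (alt b c') (rr ++ alt b c)].
Proof.
elim: rr => [|r rr IH] Hs; first by exists c; rewrite addn0.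
have [c' [Hs' Hsz Hp]] := IH Hs.
have [c1 [c2 [E H2]]] := @ins1 c' r Hs'.
exists (c1 ++ r :: r :: c2); split => //.
  by move: (congr1 size E); rewrite !size_cat /= Hsz; lia.
move=> b; rewrite (permPl (alt_ins b c1 c2 r)) /= perm_cons -E; exact: Hp.
Qed.
End Ins.
Section Extract.
Variable R : realType.

Lemma oseq_take (l : seq R) (b : bool) :
  oseq (if b then ohead l else None) = take b l.
Proof. by case: b; case: l => //= x l; rewrite take0. Qed.

Lemma prod_prefix (L rest : seq R) :
  \prod_(x <- L) ('X - x%:P) %| \prod_(x <- L ++ rest) ('X - x%:P).
Proof. by rewrite big_cat /= dvdp_mulIl. Qed.

Lemma extract (w s e : bool) (c : seq R) (d : nat) (P Q : {poly R}) (cl cr : Prop) :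
 (size c).+1 = (2 * d + s + e)%N ->
 sorted (fun x y => x < y ?<= if w) c ->
 \prod_(x <- alt (~~ s) c) ('X - x%:P) %| P ->
 \prod_(x <- alt s c) ('X - x%:P) %| Q ->
 (cl -> s /\ (0 < d)%N) -> (cr -> e /\ (0 < d)%N) ->
 exists (mu nu : seq R) (nu0 nud : option R),
    [/\ size mu = d, size nu = d.-1,
        (\prod_(x <- mu) ('X - x%:P) %| P)%R,
        (\prod_(x <- oseq nu0 ++ nu ++ oseq nud) ('X - x%:P) %| Q)%R &
      [/\
        (forall i, (i < d.-1)%N ->
           (mu`_i < nu`_i ?<= if w) /\ (nu`_i < mu`_i.+1 ?<= if w)),
        (cl -> exists2 v, nu0 = Some v & (v < mu`_0 ?<= if w)) &
        (cr -> exists2 v, nud = Some v & (mu`_d.-1 < v ?<= if w))]].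
Proof.
move=> Hsz Hsort HP HQ Hcl Hcr.
move Hn: (size c) Hsz => n Hsz.
set ql := alt s c.
have Hr : forall j, (j.+1 < size c)%N -> (c`_j < c`_j.+1 ?<= if w).
  by move=> j Hj; move/(sortedP 0): Hsort => /(_ j Hj).
have szql : size ql = ((size c + s) %/ 2)%N by rewrite /ql size_alt.
have nthmu : forall i, (alt (~~ s) c)`_i = c`_(i.*2 + s).
  by move=> i; rewrite nth_alt negbK.
have nthql : forall i, ql`_i = c`_(i.*2 + ~~ s) by move=> i; rewrite nth_alt.
have s1 : (s <= 1)%N by case: (s).
have e1 : (e <= 1)%N by case: (e).
have ns : ((~~ s : nat) = 1 - s)%N by case: (s).
exists (alt (~~ s) c), (take d.-1 (drop s ql)), (if s then ohead ql else None),
  (if e then ohead (drop d.-1 (drop s ql)) else None).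
split => //.
- rewrite size_alt ns Hn; lia.
- rewrite size_takel // size_drop szql Hn; case: d Hsz {Hcl Hcr} => [|d] Hsz /=; lia.
- rewrite !oseq_take.
  have E : ql = take s ql ++ take d.-1 (drop s ql) ++ take e (drop d.-1 (drop s ql))
     ++ drop e (drop d.-1 (drop s ql)) by rewrite !cat_take_drop.
  apply: (dvdp_trans (prod_prefix _ (drop e (drop d.-1 (drop s ql))))).
  by rewrite -!catA -E.
split.
- move=> i Hi; rewrite nth_take // nth_drop nthql !nthmu.
  have -> : ((s + i).*2 + ~~ s = (i.*2 + s).+1)%N by rewrite ns; lia.
  have -> : ((i.+1).*2 + s = (i.*2 + s).+2)%N by lia.
  split; apply: Hr; rewrite Hn; lia.
- move=> /Hcl [sT d0]; rewrite sT in Hsz szql nthql nthmu ns *.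
  have H0 : (0 < size ql)%N by rewrite szql Hn; lia.
  have := drop_nth 0 H0; rewrite drop0 => ->; exists ql`_0 => //.
  by rewrite nthql nthmu /=; apply: Hr; rewrite Hn; lia.
- move=> /Hcr [eT d0]; rewrite eT in Hsz *.
  rewrite drop_drop.
  have H0 : (d.-1 + s < size ql)%N by rewrite szql Hn; lia.
  rewrite (drop_nth 0 H0) /=; exists ql`_(d.-1 + s) => //.
  rewrite nthql nthmu.
  have -> : ((d.-1 + s).*2 + ~~ s = (d.-1.*2 + s).+1)%N by rewrite ns; lia.
  apply: Hr; rewrite Hn; lia.
Qed.
End Extract.
Section Trig.
Variable R : realType.
Local Open Scope complex_scope.

Lemma cos_atan_gt0 (t : R) : 0 < cos (atan t).
Proof. by apply: cos_gt0_pihalf; rewrite atan_gtNpi2 atan_ltpi2. Qed.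

Lemma sin_atan' (t : R) : sin (atan t) = t * cos (atan t).
Proof.
rewrite -[X in _ = X * _](atanK t) /tan divfK //.
by rewrite gt_eqF // cos_atan_gt0.
Qed.

Definition phi (z : R[i]) (x : R) : R :=
  atan ((x - complex.Re z) / complex.Im z) -
  (if 0 < complex.Im z then pi / 2 else - (pi / 2)).

Lemma phi_rep z x : complex.Im z != 0 -> exists2 rho : R, 0 < rho &
  x%:C - z = (rho * cos (phi z x)) +i* (rho * sin (phi z x)).
Proof.
case: z => a b /= b0; rewrite /phi /=.
set t := (x - a) / b.
have C0 := cos_atan_gt0 t; have St := sin_atan' t.
have tb : t * b = x - a by rewrite /t divfK.
case: (ltP 0 b) => Hb.
  exists (b / cos (atan t)); first exact: divr_gt0.
  rewrite cosBpihalf sinBpihalf St.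
  apply/eqP; rewrite eq_complex /=; apply/andP; split; apply/eqP.
    rewrite -tb; field; exact: lt0r_neq0.
  field; exact: lt0r_neq0.
have Hb' : b < 0 by rewrite lt_neqAle b0 Hb.
exists (- b / cos (atan t)); first by apply: divr_gt0 => //; rewrite oppr_gt0.
rewrite opprK cosDpihalf sinDpihalf St.
apply/eqP; rewrite eq_complex /=; apply/andP; split; apply/eqP.
  rewrite -tb; field; exact: lt0r_neq0.
field; exact: lt0r_neq0.
Qed.

Definition Theta (zs : seq R[i]) (x : R) : R := \sum_(z <- zs) phi z x.

Lemma Theta_rep zs x : all (fun z => complex.Im z != 0) zs ->
  exists2 rho : R, 0 < rho &
  \prod_(z <- zs) (x%:C - z) = (rho * cos (Theta zs x)) +i* (rho * sin (Theta zs x)).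
Proof.
elim: zs => [|z zs IH] /=.
  by move=> _; exists 1 => //; rewrite /Theta !big_nil cos0 sin0 !mulr1 mulr0.
move=> /andP[z0 /IH [r2 r20 E2]]; have [r1 r10 E1] := phi_rep x z0.
exists (r1 * r2); first exact: mulr_gt0.
rewrite /Theta !big_cons -/(Theta zs x) E1 E2 cosD sinD.
apply/eqP; rewrite eq_complex /=; apply/andP; split; apply/eqP; ring.
Qed.
End Trig.
Section Cont.
Variable R : realType.
Lemma phi_cont (z : R[i]) : continuous (phi z).
Proof.
move=> x; rewrite /phi.
apply: continuousB; last exact: cst_continuous.
apply: (continuous_comp (f := fun x : R => (x - complex.Re z) / complex.Im z)); last exact: continuous_atan.
apply: continuousM; last exact: cst_continuous.
apply: continuousB; last exact: cst_continuous.
by [].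
Qed.

Lemma Theta_cont (zs : seq R[i]) : continuous (Theta zs).
Proof.
elim: zs => [|z zs IH].
  have -> : Theta [::] = (fun=> (0:R)).
    by apply: (@funext R R) => y; rewrite /Theta big_nil.
  by move=> x; apply: cvg_cst.
have -> : Theta (z :: zs) = (fun x => phi z x + Theta zs x).
  by apply: (@funext R R) => y; rewrite /Theta big_cons.
move=> x; apply: continuousD; [exact: phi_cont | exact: IH].
Qed.
End Cont.
Section Lim.
Variable R : realType.
Lemma atan_big (eps : R) : 0 < eps -> exists Y : R, forall y, Y <= y -> pi/2 - eps < atan y.
Proof.
move=> e0.
have [M [_ HM]] := @cvgr_dist_lt _ _ _ _ _ _ _ (@cvgy_atan R) _ e0.
exists (M + 1) => y Hy.
have := HM (M + 1); rewrite ltrDl ltr01 => /(_ isT) H.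
apply: (lt_le_trans _ (le_atan Hy)).
move: H; rewrite ltr_norml; lra.
Qed.
End Lim.
Section Lim2.
Variable R : realType.

Lemma atan_lt_pihalf (t : R) : atan t < pi / 2. Proof. exact: atan_ltpi2. Qed.
Lemma atan_gt_Npihalf (t : R) : - (pi / 2) < atan t. Proof. exact: atan_gtNpi2. Qed.

Lemma phi_pinfty (z : R[i]) (eps : R) : complex.Im z != 0 -> 0 < eps ->
  exists M : R, forall x, M <= x -> `|phi z x| < eps.
Proof.
case: z => a b /= b0 e0; have [Y HY] := atan_big e0.
rewrite /phi /=.
case: (ltP 0 b) => Hb.
  exists (a + b * Y) => x Hx.
  have H1 : Y <= (x - a) / b.
    rewrite -subr_ge0 (_ : _ - _ = (x - (a + b * Y)) / b); last by field; exact: lt0r_neq0.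
    by apply: divr_ge0; [rewrite subr_ge0 | exact: ltW].
  have := HY _ H1; have := atan_lt_pihalf ((x - a) / b).
  rewrite ltr_norml; lra.
have Hb' : b < 0 by rewrite lt_neqAle b0 Hb.
exists (a - b * Y) => x Hx.
have H1 : Y <= - ((x - a) / b).
  rewrite -subr_ge0 (_ : _ - _ = (x - (a - b * Y)) / (- b)); last by field; exact: ltr0_neq0.
  by apply: divr_ge0; [rewrite subr_ge0 | rewrite oppr_ge0; exact: ltW].
have := HY _ H1; rewrite atanN; have := atan_gt_Npihalf ((x - a) / b).
rewrite ltr_norml; lra.
Qed.

Lemma phi_ninfty (z : R[i]) (eps : R) : complex.Im z != 0 -> 0 < eps ->
  exists M : R, forall x, x <= M ->
    `|phi z x - (if 0 < complex.Im z then - pi else pi)| < eps.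
Proof.
case: z => a b /= b0 e0; have [Y HY] := atan_big e0.
rewrite /phi /=.
case: (ltP 0 b) => Hb.
  exists (a - b * Y) => x Hx.
  have H1 : Y <= - ((x - a) / b).
    rewrite -subr_ge0 (_ : _ - _ = ((a - b * Y) - x) / b); last by field; exact: lt0r_neq0.
    by apply: divr_ge0; [rewrite subr_ge0 | exact: ltW].
  have := HY _ H1; rewrite atanN; have := atan_gt_Npihalf ((x - a) / b).
  rewrite ltr_norml; lra.
have Hb' : b < 0 by rewrite lt_neqAle b0 Hb.
exists (a + b * Y) => x Hx.
have H1 : Y <= (x - a) / b.
  rewrite -subr_ge0 (_ : _ - _ = ((a + b * Y) - x) / (- b)); last by field; exact: ltr0_neq0.
  by apply: divr_ge0; [rewrite subr_ge0 | rewrite oppr_ge0; exact: ltW].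
have := HY _ H1; have := atan_lt_pihalf ((x - a) / b).
rewrite ltr_norml; lra.
Qed.
End Lim2.
Section Lim3.
Variable R : realType.

Lemma Theta_cons (z : R[i]) zs x : Theta (z :: zs) x = phi z x + Theta zs x.
Proof. by rewrite /Theta big_cons. Qed.

Lemma Theta_pinfty (zs : seq R[i]) (eps : R) : all (fun z => complex.Im z != 0) zs -> 0 < eps ->
  exists M : R, forall x, M <= x -> `|Theta zs x| < eps.
Proof.
elim: zs eps => [|z zs IH] eps /=.
  by move=> _ e0; exists 0 => x _; rewrite /Theta big_nil normr0.
move=> /andP[z0 Hall] e0.
have e2 : 0 < eps / 2 by rewrite divr_gt0.
have [M1 H1] := phi_pinfty z0 e2; have [M2 H2] := IH _ Hall e2.
exists (Num.max M1 M2) => x; rewrite ge_max => /andP[x1 x2].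
rewrite Theta_cons; have := ler_normD (phi z x) (Theta zs x).
have := H1 _ x1; have := H2 _ x2; lra.
Qed.

Definition Lm (zs : seq R[i]) : R := \sum_(z <- zs) (if 0 < complex.Im z then - pi else pi).

Lemma Theta_ninfty (zs : seq R[i]) (eps : R) : all (fun z => complex.Im z != 0) zs -> 0 < eps ->
  exists M : R, forall x, x <= M -> `|Theta zs x - Lm zs| < eps.
Proof.
elim: zs eps => [|z zs IH] eps /=.
  by move=> _ e0; exists 0 => x _; rewrite /Theta /Lm !big_nil subr0 normr0.
move=> /andP[z0 Hall] e0.
have e2 : 0 < eps / 2 by rewrite divr_gt0.
have [M1 H1] := phi_ninfty z0 e2; have [M2 H2] := IH _ Hall e2.
exists (Num.min M1 M2) => x; rewrite le_min => /andP[x1 x2].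
rewrite Theta_cons /Lm big_cons -/(Lm zs).
set u := phi z x - (if 0 < complex.Im z then - pi else pi).
set v := Theta zs x - Lm zs.
have -> : phi z x + Theta zs x - ((if 0 < complex.Im z then - pi else pi) + Lm zs) = u + v.
  by rewrite /u /v; ring.
have := ler_normD u v.
have := H1 _ x1; have := H2 _ x2; rewrite -/u -/v; lra.
Qed.

Lemma Lm_count (zs : seq R[i]) : all (fun z => complex.Im z != 0) zs ->
  Lm zs = ((count (fun z => complex.Im z < 0) zs)%:R - (count (fun z => 0 < complex.Im z) zs)%:R) * pi.
Proof.
elim: zs => [|z zs IH] /=; first by rewrite /Lm big_nil subrr mul0r.
move=> /andP[z0 /IH E]; rewrite /Lm big_cons -/(Lm zs) E.
case: (ltgtP (complex.Im z) 0) z0 => // H _.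
  by rewrite /= add0n add1n mulrS; ring.
by rewrite /= add0n add1n mulrS; ring.
Qed.
End Lim3.
Section Chain.
Variable R : realType.

Lemma ivt1 (f : R -> R) a b v : continuous f -> a < b -> f b < v < f a ->
  exists c, [/\ a < c, c < b & f c = v].
Proof.
move=> fc ab /andP[h1 h2].
have [|c] := @IVT R f a b v (ltW ab) (continuous_subspaceT fc).
  by rewrite ge_min le_max (ltW h1) (ltW h2) orbT.
rewrite in_itv /= => /andP[ac cb] fcv; exists c; split => //.
  by rewrite lt_neqAle ac andbT; apply/eqP => E; move: h2; rewrite -fcv -E ltxx.
by rewrite lt_neqAle cb andbT; apply/eqP => E; move: h1; rewrite -fcv E ltxx.
Qed.

Lemma chain (f : R -> R) : continuous f -> forall m (l : nat -> R) a b, a < b ->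
  (forall j, (j < m)%N -> l j.+1 < l j) -> l 0%N < f a -> f b < l m ->
  exists X : nat -> R, [/\ forall j, (j <= m)%N -> f (X j) = l j,
     forall j, (j < m)%N -> X j < X j.+1 & a < X 0%N /\ X m < b].
Proof.
move=> fc; elim=> [|m IH] l a b ab Hl la lb.
  have [c [ac cb fcv]] := ivt1 fc ab (v := l 0%N) (introT andP (conj lb la)).
  by exists (fun=> c); split => // j; rewrite leqn0 => /eqP ->.
have l10 : l 1%N < l 0%N by apply: Hl.
have lm : f b < l 0%N.
  apply: (lt_le_trans lb).
  have : forall j, (j <= m.+1)%N -> l m.+1 <= l (m.+1 - j)%N.
    elim=> [|j IHj] Hj; first by rewrite subn0.
    apply: le_trans (IHj (ltnW Hj)) _.
    have -> : (m.+1 - j = (m.+1 - j.+1).+1)%N by lia.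
    by apply/ltW/Hl; lia.
  by move=> /(_ m.+1 (leqnn _)); rewrite subnn.
have [c [ac cb fcv]] := ivt1 fc ab (v := l 0%N) (introT andP (conj lm la)).
have [|||X [H1 H2 [H3 H4]]] := IH (fun j => l j.+1) c b cb.
- by move=> j jm; apply: Hl.
- by rewrite fcv.
- exact: lb.
exists (fun j => if j is j'.+1 then X j' else c); split => //.
- by case=> [|j] //= Hj; apply: H1.
- by case=> [|j] //= Hj; apply: H2.
Qed.
End Chain.
Section Levels.
Variable R : realType.

Definition level (K j : nat) : R := (K%:R - j%:R / 2) * pi.

Lemma sin_npi (n : nat) : sin (pi *+ n) = 0 :> R.
Proof. by have := alternatingn (@sinDpi R) n 0; rewrite add0r sin0 mulr0. Qed.

Lemma cos_npi_half (n : nat) : cos (pi / 2 + pi *+ n) = 0 :> R.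
Proof. by have := alternatingn (@cosDpi R) n (pi / 2); rewrite cos_pihalf mulr0. Qed.

Lemma level_odd K q : (q < K)%N -> cos (level K q.*2.+1) = 0.
Proof.
move=> qK; rewrite /level.
have -> : (K%:R - (q.*2.+1)%:R / 2) * pi = pi / 2 + pi *+ (K - q.+1) :> R.
  rewrite -[pi *+ _]mulr_natl natrB // -addn1 -muln2 !natrD !natrM; by field.
exact: cos_npi_half.
Qed.

Lemma level_even K q : (q <= K)%N -> sin (level K q.*2) = 0.
Proof.
move=> qK; rewrite /level.
have -> : (K%:R - (q.*2)%:R / 2) * pi = pi *+ (K - q) :> R.
  rewrite -[pi *+ _]mulr_natl natrB // -muln2 !natrM; by field.
exact: sin_npi.
Qed.

Lemma level_lt K j : level K j.+1 < level K j.
Proof.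
rewrite /level ltr_pM2r ?pi_gt0 // ltrD2l ltrN2 ltr_pM2r ?invr_gt0 ?ltr0n //.
by rewrite ltr_nat.
Qed.

Lemma level0 K : level K 0 = K%:R * pi.
Proof. by rewrite /level mul0r subr0. Qed.
Lemma level1 K : level K 1 = K%:R * pi - pi / 2.
Proof. by rewrite /level; field. Qed.
Lemma level2K K : level K (K.*2) = 0.
Proof. by rewrite /level -muln2 natrM; field. Qed.
Lemma level2K1 K : (0 < K)%N -> level K (K.*2.-1) = pi / 2.
Proof.
case: K => // K _; rewrite /level doubleS /=.
rewrite -[K.*2.+1]addn1 -[K.+1]addn1 -muln2 !natrD natrM; by field.
Qed.

Lemma left_above (K : nat) (y : R) : `|y - K%:R * pi| < pi / 2 ->
  0 < cos y * sin y -> K%:R * pi < y.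
Proof.
set t := y - K%:R * pi => Ht.
have -> : y = t + pi *+ K by rewrite /t -[pi *+ K]mulr_natl subrK.
rewrite (alternatingn (@cosDpi R)) (alternatingn (@sinDpi R)).
rewrite mulrACA -exprD addnn -mul2n exprM sqrrN !expr1n mul1r.
move: Ht; rewrite ltr_norml => /andP[h1 h2] hp.
have c0 : 0 < cos t by apply: cos_gt0_pihalf; rewrite h1 h2.
have st : 0 < sin t by rewrite -(pmulr_rgt0 _ c0).
rewrite -[pi *+ K]mulr_natl ltNge; apply/negP => t1.
have t0 : t <= 0 by lra.
have : 0 <= sin (- t).
  apply: sin_ge0_pi; rewrite oppr_ge0 t0 /=.
  apply: le_trans (ltW _) (_ : pi / 2 <= pi); first by rewrite ltrNl.
  by rewrite ler_pdivrMr // ler_peMr ?ler1n // ltW // pi_gt0.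
by rewrite sinN oppr_ge0 leNgt st.
Qed.

Lemma right_below (y : R) : `|y| < pi / 2 -> cos y * sin y < 0 -> y < 0.
Proof.
move=> Hy hp; move: Hy; rewrite ltr_norml => /andP[h1 h2].
have c0 : 0 < cos y by apply: cos_gt0_pihalf; rewrite h1 h2.
have st : sin y < 0 by rewrite -(pmulr_rlt0 _ c0).
rewrite ltNge; apply/negP => y0.
have : 0 <= sin y.
  apply: sin_ge0_pi; rewrite y0 /=.
  apply: le_trans (ltW h2) _.
  by rewrite ler_pdivrMr // ler_peMr ?ler1n // ltW // pi_gt0.
by rewrite leNgt st.
Qed.
End Levels.
Section Strict.
Variable R : realType.
Local Open Scope complex_scope.

Lemma prod_dvd_of_roots (p : {poly R}) (l : seq R) :
  all (root p) l -> uniq l -> \prod_(x <- l) ('X - x%:P) %| p.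
Proof.
move=> Hr Hu; have [q ->] := uniq_roots_prod_XsubC Hr (ltac:(by rewrite uniq_rootsE)).
by apply/dvdpP; exists q.
Qed.

Lemma arA0 (K : nat) (s e : bool) : (0 < K)%N ->
  ((K.*2 - ~~ e - ~~ s) + ~~ s = K.*2 - ~~ e)%N.
Proof. by case: s; case: e => /= *; lia. Qed.
Lemma arA1 (K : nat) (s e : bool) : (0 < K)%N ->
  ((K.*2 - ~~ e - ~~ s).+2 = 2 * K + s + e)%N.
Proof. by case: s; case: e => /= *; lia. Qed.
Lemma arA2 (K i : nat) (s e : bool) : (0 < K)%N ->
  (i < ((K.*2 - ~~ e - ~~ s).+1 + ~~ s) %/ 2)%N ->
  [/\ (i.*2 + s <= K.*2 - ~~ e - ~~ s)%N, (i < K)%N & (i.*2 + s + ~~ s = i.*2.+1)%N].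
Proof. by case: s; case: e => /= *; split; lia. Qed.
Lemma arA3 (K i : nat) (s e : bool) : (0 < K)%N ->
  (i < ((K.*2 - ~~ e - ~~ s).+1 + s) %/ 2)%N ->
  [/\ (i.*2 + ~~ s <= K.*2 - ~~ e - ~~ s)%N, (i + ~~ s <= K)%N &
      (i.*2 + ~~ s + ~~ s = (i + ~~ s).*2)%N].
Proof. by case: s; case: e => /= *; split; lia. Qed.

Lemma strict_chain (zs : seq R[i]) (P1 Q1 : {poly R}) (cl cr : Prop) :
  all (fun z => complex.Im z != 0) zs ->
  (forall x, P1.[x] +i* Q1.[x] = \prod_(z <- zs) (x%:C - z)) ->
  let np := count (fun z => 0 < complex.Im z) zs in
  let nm := count (fun z => complex.Im z < 0) zs in
  (cl -> ((np < nm)%N /\ exists M, forall x, x <= M -> 0 < P1.[x] * Q1.[x]) \/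
         ((nm < np)%N /\ exists M, forall x, x <= M -> P1.[x] * Q1.[x] < 0)) ->
  (cr -> ((np < nm)%N /\ exists M, forall x, M <= x -> P1.[x] * Q1.[x] < 0) \/
         ((nm < np)%N /\ exists M, forall x, M <= x -> 0 < P1.[x] * Q1.[x])) ->
  exists (c : seq R) (s e : bool),
    [/\ sorted (<%R) c, (size c).+1 = (2 * (maxn np nm - minn np nm) + s + e)%N,
        (cl -> s /\ (0 < maxn np nm - minn np nm)%N) /\
        (cr -> e /\ (0 < maxn np nm - minn np nm)%N),
        \prod_(x <- alt (~~ s) c) ('X - x%:P) %| P1 &
        \prod_(x <- alt s c) ('X - x%:P) %| Q1].
Proof.
move=> Hall HPQ np nm Hcl Hcr.
set K := (maxn np nm - minn np nm)%N.
have [K0|Kpos] := eqVneq K 0%N.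
  have ncl : ~ cl by move=> /Hcl [[h _]|[h _]]; move: K0; rewrite /K; lia.
  have ncr : ~ cr by move=> /Hcr [[h _]|[h _]]; move: K0; rewrite /K; lia.
  by exists [::], false, true; split => //; rewrite ?K0 //= ?big_nil ?dvd1p.
have K1 : (0 < K)%N by rewrite lt0n.
pose bb := (np < nm)%N.
pose sg : R := if bb then 1 else -1.
pose psi x := sg * Theta zs x.
have hcos : forall t, cos (sg * t) = cos t.
  by move=> t; rewrite /sg; case: ifP => _; rewrite ?mul1r // mulN1r cosN.
have hsin : forall t, sin (sg * t) = sg * sin t.
  by move=> t; rewrite /sg; case: ifP => _; rewrite ?mul1r // !mulN1r sinN.
have hnsg : `|sg| = 1 by rewrite /sg; case: ifP; rewrite ?normr1 ?normrN1.
have hsg0 : sg != 0 by rewrite /sg; case: ifP; rewrite ?oppr_eq0 oner_eq0.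
have hK : sg * Lm zs = K%:R * pi.
  have eK : K = (if bb then nm - np else np - nm)%N by rewrite /K /bb; case: ifP => h; lia.
  rewrite Lm_count // -/np -/nm /sg eK /bb; case: ifP => h.
    by rewrite mul1r natrB //; exact: ltnW.
  rewrite natrB; first ring.
  by move: Kpos; rewrite eK /bb h; lia.
have hrep : forall x, exists2 rho : R, 0 < rho &
    P1.[x] = rho * cos (Theta zs x) /\ Q1.[x] = rho * sin (Theta zs x).
  move=> x; have [rho r0 E] := Theta_rep x Hall.
  by exists rho => //; move: E; rewrite -HPQ => -[-> ->].
have hsign : forall x, exists2 r : R, 0 < r &
    sg * (P1.[x] * Q1.[x]) = r * (cos (psi x) * sin (psi x)).
  move=> x; have [rho r0 [-> ->]] := hrep x.
  exists (rho * rho); first exact: mulr_gt0.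
  by rewrite /psi hcos hsin; ring.
have psic : continuous psi.
  move=> x; apply: continuousM; first exact: cst_continuous.
  exact: Theta_cont.
have pi0 : 0 < pi :> R by exact: pi_gt0.
have pi2 : 0 < pi / 2 :> R by rewrite divr_gt0.
have [M1 HM1] := Theta_ninfty Hall pi2.
have hpsiL : forall x, x <= M1 -> `|psi x - K%:R * pi| < pi / 2.
  move=> x /HM1; rewrite /psi -hK -mulrBr normrM hnsg mul1r //.
have [M3 HM3] := Theta_pinfty Hall pi2.
have hpsiR : forall x, M3 <= x -> `|psi x| < pi / 2.
  by move=> x /HM3; rewrite /psi normrM hnsg mul1r.
have [M2 HM2] : exists M2 : R, cl -> forall x, x <= M2 -> 0 < cos (psi x) * sin (psi x).
  case: (pselect cl) => [hc|hnc]; last by exists 0.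
  have [M HM] : exists M : R, forall x, x <= M -> 0 < sg * (P1.[x] * Q1.[x]).
    case: (Hcl hc) => [[h [M HM]]|[h [M HM]]]; exists M => x /HM H.
      by rewrite /sg /bb h mul1r.
    by rewrite /sg /bb ifF ?mulN1r ?oppr_gt0 //; apply/negbTE; rewrite -leqNgt ltnW.
  exists M => _ x /HM; have [r r0 ->] := hsign x.
  by rewrite pmulr_rgt0.
have [M4 HM4] : exists M4 : R, cr -> forall x, M4 <= x -> cos (psi x) * sin (psi x) < 0.
  case: (pselect cr) => [hc|hnc]; last by exists 0.
  have [M HM] : exists M : R, forall x, M <= x -> sg * (P1.[x] * Q1.[x]) < 0.
    case: (Hcr hc) => [[h [M HM]]|[h [M HM]]]; exists M => x /HM H.
      by rewrite /sg /bb h mul1r.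
    by rewrite /sg /bb ifF ?mulN1r ?oppr_lt0 //; apply/negbTE; rewrite -leqNgt ltnW.
  exists M => _ x /HM; have [r r0 ->] := hsign x.
  by rewrite pmulr_rlt0.
set s := `[< cl >]; set e := `[< cr >].
pose a := Num.min M1 M2.
pose b := Num.max (Num.max M3 M4) (a + 1).
have ab : a < b by rewrite lt_max ltrDl ltr01 orbT.
have aM1 : a <= M1 by rewrite ge_min lexx.
have aM2 : a <= M2 by rewrite ge_min lexx orbT.
have bM3 : M3 <= b by rewrite le_max le_max lexx.
have bM4 : M4 <= b by rewrite le_max le_max lexx orbT.
have ns : ((~~ s : nat) = 1 - s)%N by case: (s).
have ne : ((~~ e : nat) = 1 - e)%N by case: (e).
have s1 : (s <= 1)%N by case: (s).
have e1 : (e <= 1)%N by case: (e).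
pose j0 : nat := ~~ s.
pose m := (K.*2 - ~~ e - j0)%N.
pose l j := level R K (j + j0).
have Hla : l 0%N < psi a.
  rewrite /l /j0 add0n; case: (boolP s) => hs /=.
    rewrite level0; apply: left_above; first exact: hpsiL.
    by apply: HM2 => //; apply/asboolP.
  by rewrite level1; move: (hpsiL a aM1); rewrite ltr_norml; lra.
have Hlb : psi b < l m.
  rewrite /l /m /j0 arA0 //.
  case: (boolP e) => he /=.
    rewrite subn0 level2K; apply: right_below; first exact: hpsiR.
    by apply: HM4 => //; apply/asboolP.
  rewrite subn1 level2K1 //; by move: (hpsiR b bM3); rewrite ltr_norml; lra.
have [X [H1 H2 [H3 H4]]] := chain psic ab (fun j _ => @level_lt R K (j + j0)) Hla Hlb.
pose c := mkseq X m.+1.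
have Hsorted : sorted <%R c.
  apply/(sortedP 0) => i; rewrite size_mkseq => Hi.
  by rewrite !nth_mkseq //; [apply: H2 | apply: ltnW].
have Hu : forall bo, uniq (alt bo c).
  move=> bo; apply: subseq_uniq (subseq_alt bo c) _.
  apply: (sorted_uniq _ _ Hsorted); [exact: lt_trans | exact: ltxx].
have nthc : forall k, (k <= m)%N -> c`_k = X k by move=> k Hk; rewrite nth_mkseq.
exists c, s, e; split => //.
- by rewrite size_mkseq /m /j0 arA1.
- by split => h; split => //; apply/asboolP.
- apply: prod_dvd_of_roots (Hu _); apply/allP => x /(nthP 0) [i Hi <-].
  rewrite size_alt size_mkseq in Hi.
  have [A1 A2 A3] := arA2 K1 Hi.
  rewrite nth_alt negbK nthc //.
  rewrite /root; have [rho _ [-> _]] := hrep (X (i.*2 + s)%N).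
  rewrite -(hcos (Theta zs _)) -/(psi _) H1 //.
  by rewrite /l /j0 A3 level_odd ?mulr0.
- apply: prod_dvd_of_roots (Hu _); apply/allP => x /(nthP 0) [i Hi <-].
  rewrite size_alt size_mkseq in Hi.
  have [A1 A2 A3] := arA3 K1 Hi.
  rewrite nth_alt nthc //.
  rewrite /root; have [rho _ [_ ->]] := hrep (X (i.*2 + ~~ s)%N).
  have : sin (psi (X (i.*2 + ~~ s)%N)) = 0.
    by rewrite H1 // /l /j0 A3 level_even.
  rewrite /psi hsin => /eqP; rewrite mulf_eq0 (negbTE hsg0) /= => /eqP ->.
  by rewrite mulr0.
Qed.
End Strict.
Section Alg.
Variable R : realType.
Local Open Scope complex_scope.

Lemma cplx_decomp (a b : R) : a%:C + iC R * b%:C = a +i* b.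
Proof. apply/eqP; rewrite eq_complex /=; apply/andP; split; apply/eqP; ring. Qed.

Lemma polyC_of_coef (p : {poly R}) k : (polyC_of p)`_k = (p`_k)%:C.
Proof. by rewrite /polyC_of coef_map. Qed.

Lemma polyC_of_inj2 (A B C D : {poly R}) :
  polyC_of A + (iC R)%:P * polyC_of B = polyC_of C + (iC R)%:P * polyC_of D ->
  A = C /\ B = D.
Proof.
move=> E; suff H : forall k, A`_k = C`_k /\ B`_k = D`_k.
  by split; apply/polyP => k; case: (H k).
move=> k; move/(congr1 (fun p : {poly R[i]} => p`_k)): E.
by rewrite !coefD !coefCM !polyC_of_coef !cplx_decomp => -[-> ->].
Qed.

Lemma polyC_ofM (p q : {poly R}) : polyC_of (p * q) = polyC_of p * polyC_of q.
Proof. by rewrite /polyC_of rmorphM. Qed.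

Lemma horner_polyC_of (p : {poly R}) (x : R) : (polyC_of p).[x%:C] = (p.[x])%:C.
Proof. by rewrite /polyC_of horner_map. Qed.

Lemma re_im_decomp (g : {poly R[i]}) :
  g = polyC_of (map_poly (@complex.Re R) g) + (iC R)%:P * polyC_of (map_poly (@complex.Im R) g).
Proof.
apply/polyP => k; rewrite coefD coefCM !polyC_of_coef !coef_map_id0 //.
by rewrite cplx_decomp; case: (g`_k).
Qed.

Lemma polyC_of_prod (rr : seq R) :
  polyC_of (\prod_(r <- rr) ('X - r%:P)) = \prod_(r <- rr) ('X - (r%:C)%:P).
Proof.
rewrite /polyC_of rmorph_prod; apply: eq_bigr => r _; exact: map_polyXsubC.
Qed.
End Alg.
Section Filt.
Variable R : realType.
Local Open Scope classical_set_scope.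

Lemma ev_ninfty_pos (f : R -> R) : f x @[x --> -oo] --> +oo ->
  exists M : R, forall x, x <= M -> 0 < f x.
Proof.
move=> /cvgryPgt /(_ 0) [M [_ HM]]; exists (M - 1) => x Hx.
by apply: HM; apply: le_lt_trans Hx _; rewrite ltrBlDr ltrDl ltr01.
Qed.

Lemma ev_ninfty_neg (f : R -> R) : f x @[x --> -oo] --> -oo ->
  exists M : R, forall x, x <= M -> f x < 0.
Proof.
move=> /cvgrNyPle /(_ (-1)) [M [_ HM]]; exists (M - 1) => x Hx.
apply: le_lt_trans (HM _ _) _; last by rewrite ltrN10.
by apply: le_lt_trans Hx _; rewrite ltrBlDr ltrDl ltr01.
Qed.

Lemma ev_pinfty_pos (f : R -> R) : f x @[x --> +oo] --> +oo ->
  exists M : R, forall x, M <= x -> 0 < f x.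
Proof.
move=> /cvgryPgt /(_ 0) [M [_ HM]]; exists (M + 1) => x Hx.
by apply: HM; apply: lt_le_trans Hx; rewrite ltrDl ltr01.
Qed.

Lemma ev_pinfty_neg (f : R -> R) : f x @[x --> +oo] --> -oo ->
  exists M : R, forall x, M <= x -> f x < 0.
Proof.
move=> /cvgrNyPle /(_ (-1)) [M [_ HM]]; exists (M + 1) => x Hx.
apply: le_lt_trans (HM _ _) _; last by rewrite ltrN10.
by apply: lt_le_trans Hx; rewrite ltrDl ltr01.
Qed.

Local Close Scope classical_set_scope.

Lemma sign_pos (p q hh p1 q1 : R) : 0 < p / q -> p = hh * p1 -> q = hh * q1 -> 0 < p1 * q1.
Proof.
move=> H Ep Eq.
have q0 : q != 0 by apply: contraTneq H => ->; rewrite invr0 mulr0 ltxx.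
have qq : 0 < q ^+ 2 by rewrite lt_def sqrf_eq0 q0 sqr_ge0.
have pq : 0 < p * q.
  have -> : p * q = (p / q) * (q ^+ 2) by field.
  exact: mulr_gt0.
rewrite ltNge; apply/negP => H1; move: pq; rewrite ltNge => /negP; apply.
have -> : p * q = hh ^+ 2 * (p1 * q1) by rewrite Ep Eq; ring.
exact: mulr_ge0_le0 (sqr_ge0 _) H1.
Qed.

Lemma sign_neg (p q hh p1 q1 : R) : p / q < 0 -> p = hh * p1 -> q = hh * q1 -> p1 * q1 < 0.
Proof.
move=> H Ep Eq; rewrite -oppr_gt0 -mulNr.
apply: (@sign_pos (- p) q hh); last exact: Eq.
  by rewrite mulNr oppr_gt0.
by rewrite Ep mulrN.
Qed.
End Filt.
Section Part1.
Variable R : realType.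
Local Open Scope complex_scope.

Lemma count3 (rs : seq R[i]) :
  (count (fun z : R[i] => (0 < complex.Im z)%R) rs + count (fun z : R[i] => (complex.Im z < 0)%R) rs +
   count (fun z : R[i] => (complex.Im z == 0)%R) rs)%N = size rs.
Proof.
elim: rs => [|z rs IH] //=.
by case: (ltgtP (complex.Im z) 0) => /= _; rewrite -IH; lia.
Qed.

Lemma size_PiQ (n : nat) (P Q : {poly R}) : P \is monic -> size P = n.+1 -> (size Q <= n)%N ->
  size (polyC_of P + (iC R)%:P * polyC_of Q) = n.+1.
Proof.
move=> Pm Ps Qs.
have co : forall j, (polyC_of P + (iC R)%:P * polyC_of Q)`_j = P`_j +i* Q`_j.
  by move=> j; rewrite coefD coefCM !polyC_of_coef cplx_decomp.
apply/eqP; rewrite eqn_leq; apply/andP; split.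
  apply/leq_sizeP => j Hj; rewrite co.
  have /leq_sizeP -> // : (size P <= j)%N by rewrite Ps.
  by have /leq_sizeP -> // : (size Q <= j)%N by apply: leq_trans Qs _; apply: ltnW.
rewrite ltnNge; apply/negP => /leq_sizeP /(_ n (leqnn n)); rewrite co.
have -> : P`_n = 1 by move/monicP: Pm; rewrite lead_coefE Ps.
by move=> -[] /eqP; rewrite oner_eq0.
Qed.

Lemma part1 (n : nat) (P Q : {poly R}) (rs : seq R[i]) (np nm n0 : nat) :
     (1 <= n)%N ->
     P \is monic -> size P = n.+1 -> (size Q <= n)%N ->
     polyC_of P + (iC R)%:P * polyC_of Q = \prod_(z <- rs) ('X - z%:P) ->
     np = count (fun z => 0 < complex.Im z) rs ->
     nm = count (fun z => complex.Im z < 0) rs ->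
     n0 = count (fun z => complex.Im z == 0) rs ->
     (n0 < n)%N ->
     interlacing_conclusion n np nm n0 P Q.
Proof.
move=> n1 Pm Psz Qsz HF Enp Enm En0 n0n.
set zs := [seq z <- rs | complex.Im z != 0].
set rrC := [seq z <- rs | complex.Im z == 0].
set rr := map (@complex.Re R) rrC.
set h := \prod_(r <- rr) ('X - r%:P).
set g := \prod_(z <- zs) ('X - z%:P).
set P1 := map_poly (@complex.Re R) g; set Q1 := map_poly (@complex.Im R) g.
have Hg : g = polyC_of P1 + (iC R)%:P * polyC_of Q1 := re_im_decomp g.
have Hh : polyC_of h = \prod_(z <- rrC) ('X - z%:P).
  rewrite polyC_of_prod big_map; apply: eq_big_seq => z.
  by rewrite mem_filter => /andP[/eqP z0 _]; case: z z0 => a b /= ->.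
have Hsplit : \prod_(z <- rs) ('X - z%:P) = polyC_of h * g.
  rewrite Hh /g -big_cat; apply: perm_big; rewrite perm_sym.
  have := perm_filterC (fun z : R[i] => complex.Im z == 0) rs.
  by move=> /(_ rs); rewrite perm_refl.
have EPQ : polyC_of P + (iC R)%:P * polyC_of Q =
           polyC_of (h * P1) + (iC R)%:P * polyC_of (h * Q1).
  by rewrite HF Hsplit Hg !polyC_ofM mulrDr mulrCA.
have [EP EQ] := polyC_of_inj2 EPQ.
have HPQ : forall x, P1.[x] +i* Q1.[x] = \prod_(z <- zs) (x%:C - z).
  move=> x; have := congr1 (fun p => p.[x%:C]) Hg.
  rewrite /= hornerD hornerM hornerC !horner_polyC_of cplx_decomp => <-.
  by rewrite /g horner_prod; apply: eq_bigr => z _; exact: hornerXsubC.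
have Hall : all (fun z => complex.Im z != 0) zs.
  by apply/allP => z; rewrite mem_filter => /andP[].
have Enp' : np = count (fun z => 0 < complex.Im z) zs.
  rewrite Enp /zs count_filter; apply: eq_count => z /=.
  by case: (ltgtP (complex.Im z) 0).
have Enm' : nm = count (fun z => complex.Im z < 0) zs.
  rewrite Enm /zs count_filter; apply: eq_count => z /=.
  by case: (ltgtP (complex.Im z) 0).
have En0' : n0 = size rr by rewrite /rr size_map size_filter.
have Hsize : size rs = n.
  have := congr1 (fun p : {poly R[i]} => size p) HF; rewrite /= (size_PiQ Pm Psz Qsz) size_prod_XsubC.
  by move=> [].
have En : n = (np + nm + n0)%N by rewrite -Hsize -count3 Enp Enm En0.
have Hcl' : cond_left np nm P Q ->
   ((np < nm)%N /\ exists M : R, forall x, x <= M -> 0 < P1.[x] * Q1.[x]) \/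
   ((nm < np)%N /\ exists M : R, forall x, x <= M -> P1.[x] * Q1.[x] < 0).
  case=> [[h1 H]|[h1 H]]; [left|right]; split => //.
    have [M HM] := ev_ninfty_pos H; exists M => x /HM Hx.
    by apply: (sign_pos Hx); rewrite ?EP ?EQ hornerM.
  have [M HM] := ev_ninfty_neg H; exists M => x /HM Hx.
  by apply: (sign_neg Hx); rewrite ?EP ?EQ hornerM.
have Hcr' : cond_right np nm P Q ->
   ((np < nm)%N /\ exists M : R, forall x, M <= x -> P1.[x] * Q1.[x] < 0) \/
   ((nm < np)%N /\ exists M : R, forall x, M <= x -> 0 < P1.[x] * Q1.[x]).
  case=> [[h1 H]|[h1 H]]; [left|right]; split => //.
    have [M HM] := ev_pinfty_neg H; exists M => x /HM Hx.
    by apply: (sign_neg Hx); rewrite ?EP ?EQ hornerM.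
  have [M HM] := ev_pinfty_pos H; exists M => x /HM Hx.
  by apply: (sign_pos Hx); rewrite ?EP ?EQ hornerM.
rewrite Enp' Enm' in Hcl' Hcr'.
have [c0 [s [e [Hs0 Hsz0 [Hcls Hcrs] HP1 HQ1]]]] :=
  strict_chain Hall HPQ Hcl' Hcr'.
rewrite -Enp' -Enm' in Hsz0 Hcls Hcrs.
set K := (maxn np nm - minn np nm)%N in Hsz0 Hcls Hcrs.
have Hd : (n - 2 * minn np nm = K + n0)%N.
  by rewrite /K; move: En; clear; lia.
have [c [Hsz Hsort HPc HQc]] : exists c : seq R,
   [/\ (size c).+1 = (2 * (K + n0) + s + e)%N,
       sorted (fun x y => x < y ?<= if (n0 != 0)%N) c,
       \prod_(x <- alt (~~ s) c) ('X - x%:P) %| P &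
       \prod_(x <- alt s c) ('X - x%:P) %| Q].
  have [n00|n0nz] := eqVneq n0 0%N.
    have rr0 : rr = [::] by apply: size0nil; rewrite -En0'.
    have h1 : h = 1 by rewrite /h rr0 big_nil.
    exists c0; split.
    - by rewrite n00 addn0.
    - by apply: sub_sorted Hs0 => x y /=; rewrite ?lteifF.
    - by rewrite EP h1 mul1r.
    - by rewrite EQ h1 mul1r.
  have Hs0' : sorted <=%R c0 by apply: sub_sorted Hs0 => x y /ltW.
  have [c [Hs Hszc Hp]] := ins_all rr Hs0'.
  exists c; split.
  - by rewrite Hszc En0'; move: Hsz0; clear; lia.
  - by apply: sub_sorted Hs => x y /=; rewrite ?lteifT.
  - by rewrite (perm_big _ (Hp _)) big_cat /= EP; apply: dvdp_mul (dvdpp _) HP1.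
  - by rewrite (perm_big _ (Hp _)) big_cat /= EQ; apply: dvdp_mul (dvdpp _) HQ1.
rewrite /interlacing_conclusion /= Hd.
apply: (extract Hsz Hsort HPc HQc).
- by move=> /Hcls [-> k0]; split => //; rewrite addn_gt0 k0.
- by move=> /Hcrs [-> k0]; split => //; rewrite addn_gt0 k0.
Qed.
End Part1.
Section Scale.
Variable F : fieldType.

Lemma prod_scale (c : F) (rs : seq F) k :
  (\prod_(z <- rs) ('X - (c * z)%:P))`_k =
  c ^+ (size rs - k) * (\prod_(z <- rs) ('X - z%:P))`_k.
Proof.
elim: rs k => [|z rs IH] k.
  by rewrite !big_nil sub0n expr0 mul1r.
rewrite !big_cons !mulrBl !coefB !coefXM !coefCM /=.
have Hsz : size (\prod_(z <- rs) ('X - z%:P)) = (size rs).+1 := size_prod_XsubC _ _.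
case: k => [|k] /=.
  by rewrite IH !subn0 exprS; ring.
rewrite !IH subSS.
have [km|km] := ltnP k (size rs).
  have -> : (size rs - k = (size rs - k.+1).+1)%N by lia.
  by rewrite exprS; ring.
set B := \prod_(z <- rs) ('X - z%:P) in Hsz *.
have -> : B`_k.+1 = 0.
  by have /leq_sizeP -> // : (size B <= k.+1)%N by rewrite Hsz.
have -> : (size rs - k.+1 = 0)%N by lia.
have -> : (size rs - k = 0)%N by lia.
by rewrite !mulr0 !subr0.
Qed.
End Scale.
Section Part2.
Variable R : realType.
Local Open Scope complex_scope.

Lemma iC2 : iC R ^+ 2 = -1.
Proof. by apply/eqP; rewrite expr2 eq_complex /=; apply/andP; split; apply/eqP; ring. Qed.

Lemma negi_pow (m : nat) : (- iC R) ^+ m =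
  (if odd m then (-1) ^+ (m./2) * (- iC R) else (-1) ^+ (m./2)).
Proof.
rewrite -{1}(odd_double_half m) exprD -mul2n exprM sqrrN iC2.
by case: (odd m); rewrite /= ?expr1 ?expr0 ?mul1r // mulrC.
Qed.

Lemma Im_negi (z : R[i]) : complex.Im (- iC R * z) = - complex.Re z.
Proof. by case: z => a b /=; ring. Qed.

Lemma cl_sym (np nm : nat) (P Q : {poly R}) :
  cond_left np nm P Q -> cond_left nm np P (- Q).
Proof.
have E : (fun x => P.[x] / (- Q).[x]) = - (fun x => P.[x] / Q.[x]).
  by apply: funext => x /=; rewrite hornerN invrN mulrN.
case=> [[h H]|[h H]]; [right|left]; split => //; rewrite E.
  by apply/cvgNrNy.
by apply/cvgNry.
Qed.

Lemma cr_sym (np nm : nat) (P Q : {poly R}) :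
  cond_right np nm P Q -> cond_right nm np P (- Q).
Proof.
have E : (fun x => P.[x] / (- Q).[x]) = - (fun x => P.[x] / Q.[x]).
  by apply: funext => x /=; rewrite hornerN invrN mulrN.
case=> [[h H]|[h H]]; [right|left]; split => //; rewrite E.
  by apply/cvgNry.
by apply/cvgNrNy.
Qed.

Lemma conclusion_sym n np nm n0 (P Q : {poly R}) :
  interlacing_conclusion n nm np n0 P (- Q) -> interlacing_conclusion n np nm n0 P Q.
Proof.
rewrite /interlacing_conclusion /= minnC.
move=> [mu [nu [nu0 [nud [H1 H2 H3 H4 [H5 H6 H7]]]]]].
exists mu, nu, nu0, nud; split => //; first by rewrite -dvdpNr.
split => //.
- by move=> /cl_sym; apply: H6.
- by move=> /cr_sym; apply: H7.
Qed.
End Part2.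
Section Part2b.
Variable R : realType.
Local Open Scope complex_scope.

Lemma part2 (n : nat) (f : {poly R}) (rs : seq R[i]) (np nm n0 : nat) :
     (1 <= n)%N ->
     f \is monic -> size f = n.+1 ->
     polyC_of f = \prod_(z <- rs) ('X - z%:P) ->
     np = count (fun z => 0 < complex.Re z) rs ->
     nm = count (fun z => complex.Re z < 0) rs ->
     n0 = count (fun z => complex.Re z == 0) rs ->
     (n0 < n)%N ->
     interlacing_conclusion n np nm n0 (even_part n f) (odd_part n f).
Proof.
move=> n1 fm fsz Hf Enp Enm En0 n0n.
set E := even_part n f; set O := odd_part n f.
set rs' := map (fun z => - iC R * z) rs.
have Hrs : size rs = n.
  have := congr1 (fun p : {poly R[i]} => size p) Hf.
  by rewrite /= /polyC_of size_map_poly fsz size_prod_XsubC => -[].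
have fn : f`_n = 1 by move/monicP: fm; rewrite lead_coefE fsz.
have HF' : polyC_of E + (iC R)%:P * polyC_of (- O) = \prod_(w <- rs') ('X - w%:P).
  rewrite big_map; apply/polyP => k.
  rewrite prod_scale -Hf polyC_of_coef Hrs coefD coefCM !polyC_of_coef coefN /E /O.
  rewrite /even_part /odd_part !coef_poly.
  case: ltnP => kn.
    rewrite negi_pow; case: ifP => ho.
      by rewrite !rmorphN !rmorphM !rmorphXn !rmorphN1 !rmorph0; ring.
    by rewrite !rmorphN !rmorphM !rmorphXn !rmorphN1 !rmorph0; ring.
  have -> : f`_k = 0 by have /leq_sizeP -> // : (size f <= k)%N by rewrite fsz.
  by rewrite !rmorphN !rmorph0; ring.
have coE : forall k, E`_k = if (k < n.+1)%N then
    (if odd (n - k) then 0 else (-1) ^+ ((n - k)./2) * f`_k) else 0.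
  by move=> k; rewrite /E /even_part coef_poly.
have En' : E`_n = 1 by rewrite coE ltnSn subnn /= expr0 mul1r.
have Esz : size E = n.+1.
  apply/eqP; rewrite eqn_leq; apply/andP; split; first exact: size_poly.
  rewrite ltnNge; apply/negP => /leq_sizeP /(_ n (leqnn n)); rewrite En'.
  by move=> /eqP; rewrite oner_eq0.
have Em : E \is monic by apply/monicP; rewrite lead_coefE Esz.
have Osz : (size (- O) <= n)%N.
  rewrite size_polyN; apply/leq_sizeP => j Hj; rewrite /O /odd_part coef_poly.
  case: ltnP => // jn; have -> : j = n by lia.
  by rewrite subnn.
apply: conclusion_sym.
apply: (@part1 R n E (- O) rs' nm np n0) => //.
- by rewrite Enm /rs' count_map; apply: eq_count => z /=; rewrite Im_negi oppr_gt0.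
- by rewrite Enp /rs' count_map; apply: eq_count => z /=; rewrite Im_negi oppr_lt0.
- by rewrite En0 /rs' count_map; apply: eq_count => z /=; rewrite Im_negi oppr_eq0.
Qed.
End Part2b.

Unset Implicit Arguments.

Theorem mainTheorem3 (R : realType) :
  (* Part 1: f = P + i Q *)
  (forall (n : nat) (P Q : {poly R}) (rs : seq R[i]) (np nm n0 : nat),
     (1 <= n)%N ->
     P \is monic -> size P = n.+1 -> (size Q <= n)%N ->
     polyC_of P + (iC R)%:P * polyC_of Q = \prod_(z <- rs) ('X - z%:P) ->
     np = count (fun z => 0 < complex.Im z) rs ->
     nm = count (fun z => complex.Im z < 0) rs ->
     n0 = count (fun z => complex.Im z == 0) rs ->
     (n0 < n)%N ->
     interlacing_conclusion n np nm n0 P Q) /\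
  (* Part 2: f real, roots split by the sign of the real part *)
  (forall (n : nat) (f : {poly R}) (rs : seq R[i]) (np nm n0 : nat),
     (1 <= n)%N ->
     f \is monic -> size f = n.+1 ->
     polyC_of f = \prod_(z <- rs) ('X - z%:P) ->
     np = count (fun z => 0 < complex.Re z) rs ->
     nm = count (fun z => complex.Re z < 0) rs ->
     n0 = count (fun z => complex.Re z == 0) rs ->
     (n0 < n)%N ->
     interlacing_conclusion n np nm n0 (even_part n f) (odd_part n f)).
Proof.
split; [exact: part1 | exact: part2].
Qed.
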